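(* Let $H\ne\{1\}$ be a reduced atomic unit-cancellative monoid and suppose that at least one of the following holds: (a) there is $L\in\mathcal L(H)$ with $\rho(L)=\rho(H)<\infty$; (b) $H$ is cancellative and its monoid of relations $\sim_H$ is finitely generated; (c) $H$ is commutative and finitely generated. Then there is $M\in\mathbb N$ such that $\rho_k(H)-\rho_{k-1}(H)\le M$ for all $k\ge 2$ (in particular $\rho_k(H)<\infty$ for all $k\in\mathbb N$).
   Context: Monoid = associative semigroup with identity; reduced means the only unit is $1$; unit-cancellative means $a=au$ or $a=ua$ implies $u$ is a unit; atomic means every non-unit is a finite product of atoms (irreducible non-units). For $a\in H$, $\mathsf L(a)\subset\mathbb N$ is the set of all $k$ such that $a$ is a product of $k$ atoms, with $\mathsf L(1)=\{0\}$; $\mathcal L(H)=\{\mathsf L(a)\mid a\in H\}$. For $L\subset\mathbb N_0$, $\rho(L)=\sup(L\cap\mathbb N)/\min(L\cap\mathbb N)$ if $L\cap\mathbb N\neq\emptyset$ and $\rho(L)=1$ otherwise; $\rho(H)=\sup\{\rho(L)\mid L\in\mathcal L(H)\}$. For $k\in\mathbb N$, $\mathcal U_k(H)=\bigcup\{L\in\mathcal L(H)\mid k\in L\}$ and $\rho_k(H)=\sup\mathcal U_k(H)$. The factorization monoid $\mathsf Z(H)$ is the free monoid on the atoms (free abelian if $H$ is commutative), $\pi:\mathsf Z(H)\to H$ the canonical epimorphism, and $\sim_H=\{(x,y)\in\mathsf Z(H)^2\mid \pi(x)=\pi(y)\}$ is the monoid of relations (componentwise multiplication). *)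

(* Defs.v *)
From Stdlib Require Import Reals List Permutation Arith.
Import ListNotations.
Open Scope R_scope.

Record Monoid := {
  carrier :> Type;
  mul : carrier -> carrier -> carrier;
  one : carrier;
  mulA : forall a b c, mul a (mul b c) = mul (mul a b) c;
  mul1l : forall a, mul one a = a;
  mul1r : forall a, mul a one = a
}.

Arguments mul {m}.
Arguments one {m}.

Section Defs.
Variable H : Monoid.

Definition is_unit (u : H) : Prop :=
  exists v : H, mul u v = one /\ mul v u = one.

Definition reduced : Prop := forall u : H, is_unit u -> u = one.

Definition unit_cancellative : Prop :=
  forall a u : H, (a = mul a u \/ a = mul u a) -> is_unit u.

Definition cancellative : Prop :=
  (forall a b c : H, mul a b = mul a c -> b = c) /\
  (forall a b c : H, mul b a = mul c a -> b = c).

Definition commutative : Prop := forall a b : H, mul a b = mul b a.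

Definition is_atom (a : H) : Prop :=
  ~ is_unit a /\ forall b c : H, a = mul b c -> is_unit b \/ is_unit c.

Definition prod (l : list H) : H := fold_right mul one l.

Definition atomic : Prop :=
  forall a : H, ~ is_unit a ->
    exists l : list H, Forall is_atom l /\ l <> [] /\ prod l = a.

Definition Lset (a : H) (k : nat) : Prop :=
  (a = one /\ k = 0%nat) \/
  (a <> one /\ exists l : list H, Forall is_atom l /\ length l = k /\ prod l = a).

(* rho(L) = x, for L = L(a) : a subset of N_0.  rho(L) is finite iff
   L ∩ N is empty (then rho(L) = 1) or bounded (then rho = max/min). *)
Definition rho_set_is (L : nat -> Prop) (x : R) : Prop :=
  ((forall k, L k -> k = 0%nat) /\ x = 1) \/
  (exists M m : nat,
      L M /\ (0 < M)%nat /\ (forall k, L k -> (k <= M)%nat) /\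
      L m /\ (0 < m)%nat /\ (forall k, L k -> (0 < k)%nat -> (m <= k)%nat) /\
      x = INR M / INR m).

Definition rho_monoid_is (x : R) : Prop :=
  (forall a : H, exists y, rho_set_is (Lset a) y) /\
  is_lub (fun y => exists a : H, rho_set_is (Lset a) y) x.

Definition Uk (k : nat) (n : nat) : Prop :=
  exists a : H, Lset a k /\ Lset a n.

Definition rhok_is (k : nat) (r : nat) : Prop :=
  Uk k r /\ forall n, Uk k n -> (n <= r)%nat.

(* Factorization monoid Z(H): words (lists) of atoms, identified up to
   permutation when H is commutative (free abelian monoid). *)
Definition factorization (z : list H) : Prop := Forall is_atom z.

Definition zeq (z z' : list H) : Prop :=
  (commutative /\ Permutation z z') \/ (~ commutative /\ z = z').

Definition in_relations (p : list H * list H) : Prop :=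
  factorization (fst p) /\ factorization (snd p) /\ prod (fst p) = prod (snd p).

(* ~_H is finitely generated (as a monoid, componentwise multiplication) *)
Definition relations_fg : Prop :=
  exists gens : list (list H * list H),
    Forall in_relations gens /\
    forall p, in_relations p ->
      exists s : list (list H * list H),
        Forall (fun g => In g gens) s /\
        zeq (fst p) (concat (map fst s)) /\
        zeq (snd p) (concat (map snd s)).

Definition finitely_generated : Prop :=
  exists gens : list H,
    forall a : H, exists s : list H, Forall (fun g => In g gens) s /\ prod s = a.

End Defs.
Arguments rho_set_is L x : clear implicits.

(* Main.v *)
Require Import Defs.
From Stdlib Require Import Reals List Permutation Arith Lia Lra Classical FunctionalExtensionality.
Import ListNotations.

Section Basics.
Local Open Scope nat_scope.
Variable H : Monoid.
Hypothesis Hred : reduced H.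
Hypothesis Huc : unit_cancellative H.

Lemma prod_app (l1 l2 : list H) : prod H (l1 ++ l2) = mul (prod H l1) (prod H l2).
Proof. induction l1 as [|a l IH]; simpl. - now rewrite mul1l. - rewrite IH. apply mulA. Qed.

Lemma one_unit : is_unit H one. Proof. exists one. split; apply mul1l. Qed.

Lemma atom_neq_one (u : H) : is_atom H u -> u <> one.
Proof. intros [Hu _] E. apply Hu. rewrite E. apply one_unit. Qed.

Lemma right_inv_one (u w : H) : mul u w = one -> u = one.
Proof. intros E.
  assert (E2 : u = mul u (mul w u)). { rewrite mulA, E, mul1l. reflexivity. }
  assert (U : is_unit H (mul w u)) by (apply (Huc u); left; exact E2).
  apply Hred in U.
  apply Hred. exists w. split; assumption.
Qed.

Lemma prod_atoms_one (l : list H) : Forall (is_atom H) l -> prod H l = one -> l = [].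
Proof. intros F E. destruct l as [|u l]; auto. inversion F; subst. simpl in E.
  apply right_inv_one in E. exfalso. exact (atom_neq_one u H2 E). Qed.

Lemma Lset_lists (a : H) k : Lset H a k ->
  exists z, Forall (is_atom H) z /\ length z = k /\ prod H z = a.
Proof. intros [[E1 E2]|[_ Hz]]; auto. exists []. subst. simpl. auto. Qed.

Lemma lists_Uk (z z' : list H) : Forall (is_atom H) z -> Forall (is_atom H) z' ->
  prod H z = prod H z' -> Uk H (length z) (length z').
Proof. intros F F' E. exists (prod H z). destruct z as [|u z].
  - simpl in *. assert (z' = []) by (apply prod_atoms_one; auto). subst. simpl.
    split; left; auto.
  - assert (N : prod H (u :: z) <> one).
    { intro E0. apply prod_atoms_one in E0; auto. discriminate. }
    split; right; split; auto.
    + exists (u :: z). auto.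
    + exists z'. auto.
Qed.

Lemma Uk_lists k n : Uk H k n -> exists z z', Forall (is_atom H) z /\ Forall (is_atom H) z' /\
  length z = k /\ length z' = n /\ prod H z = prod H z'.
Proof. intros [a [L1 L2]]. apply Lset_lists in L1 as [z [F1 [l1 p1]]].
  apply Lset_lists in L2 as [z' [F2 [l2 p2]]]. exists z, z'. repeat split; auto. congruence. Qed.

Lemma exists_atom : (exists a : H, a <> one) -> atomic H -> exists u, is_atom H u.
Proof. intros [a Ha] At. destruct (At a) as [l [F [Hn _]]].
  - intro U. apply Hred in U. auto.
  - destruct l as [|u l]; [congruence|]. inversion F; subst. eauto. Qed.

Lemma Uk_refl (u : H) : is_atom H u -> forall k, Uk H k k.
Proof. intros Hu k. pose proof (lists_Uk (repeat u k) (repeat u k)) as X.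
  rewrite repeat_length in X. apply X; auto; apply Forall_forall; intros x Hx;
  apply repeat_spec in Hx; subst; auto. Qed.

Lemma Uk_pad (u : H) : is_atom H u -> forall k n, Uk H k n -> Uk H (S k) (S n).
Proof. intros Hu k n U. apply Uk_lists in U as [z [z' [F [F' [<- [<- E]]]]]].
  pose proof (lists_Uk (z ++ [u]) (z' ++ [u])) as X. rewrite !length_app in X. simpl in X.
  replace (S (length z)) with (length z + 1) by lia.
  replace (S (length z')) with (length z' + 1) by lia.
  apply X; try (apply Forall_app; auto). rewrite !prod_app. congruence. Qed.

Lemma Uk_pad_many (u : H) : is_atom H u -> forall i k n, Uk H k n -> Uk H (k + i) (n + i).
Proof. intros Hu i. induction i; intros k n U. - rewrite !Nat.add_0_r. auto.
  - replace (k + S i) with (S (k + i)) by lia. replace (n + S i) with (S (n + i)) by lia.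
    apply (Uk_pad u); auto. Qed.

Lemma Uk_0 n : Uk H 0 n -> n = 0.
Proof. intro U. apply Uk_lists in U as [z [z' [F [F' [L1 [L2 E]]]]]].
  destruct z; [|discriminate]. simpl in E. symmetry in E. apply prod_atoms_one in E; auto.
  subst; auto. Qed.

Lemma Uk_1 n : Uk H 1 n -> n = 1.
Proof. intro U. apply Uk_lists in U as [z [z' [F [F' [L1 [L2 E]]]]]].
  destruct z as [|u [|]]; try discriminate.
  assert (Au : is_atom H u) by (inversion F; auto).
  simpl in E. rewrite mul1r in E. subst n.
  destruct z' as [|v [|w r]]; auto.
  - simpl in E. exfalso. exact (atom_neq_one u Au E).
  - exfalso. assert (Av : is_atom H v) by (inversion F'; auto).
    assert (Fr : Forall (is_atom H) (w :: r)) by (inversion F'; auto).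
    destruct Au as [_ Hs]. simpl in E.
    destruct (Hs v (mul w (prod H r)) E) as [U|U].
    + destruct Av as [HA _]. auto.
    + apply Hred in U. assert (w :: r = []) by (apply prod_atoms_one; auto). discriminate.
Qed.

End Basics.

Lemma nat_max_exists (P : nat -> Prop) (B : nat) :
  (exists n, P n) -> (forall n, P n -> (n <= B)%nat) -> exists r, P r /\ forall n, P n -> (n <= r)%nat.
Proof.
  revert P. induction B; intros P [n0 Hn0] Hb.
  - exists 0%nat. assert (n0 = 0%nat) by (specialize (Hb n0 Hn0); lia). subst. split; auto.
  - destruct (classic (P (S B))) as [HS|HS].
    + exists (S B). auto.
    + apply IHB; eauto. intros n Pn. specialize (Hb n Pn). assert (n <> S B) by (intro; subst; auto). lia.
Qed.

Section Assemble.
Local Open Scope nat_scope.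
Variable H : Monoid.
Hypothesis Hred : reduced H.
Hypothesis Huc : unit_cancellative H.

Definition JB (M : nat) : Prop :=
  forall k, 2 <= k -> forall n, Uk H k n -> exists n', Uk H (k - 1) n' /\ n <= n' + M.

Lemma from_JB (u : H) (Hu : is_atom H u) (M : nat) : JB M ->
  exists M : nat, forall k : nat, (2 <= k)%nat ->
    exists r r' : nat, rhok_is H k r /\ rhok_is H (k - 1) r' /\ (r <= r' + M)%nat.
Proof.
  intros J. exists M.
  assert (Bnd : forall k, exists B, forall n, Uk H k n -> n <= B).
  { induction k as [k IH] using lt_wf_ind.
    destruct k as [|[|k]].
    - exists 0. intros n U. apply Uk_0 in U; auto. lia.
    - exists 1. intros n U. apply Uk_1 in U; auto. lia.
    - destruct (IH (S k)) as [B HB]; [lia|]. exists (B + M). intros n U.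
      destruct (J (S (S k))) with n as [n' [U' Hn']]; [lia|auto|].
      replace (S (S k) - 1) with (S k) in U' by lia. specialize (HB n' U'). lia. }
  assert (Mx : forall k, exists r, rhok_is H k r).
  { intro k. destruct (Bnd k) as [B HB].
    destruct (nat_max_exists (Uk H k) B) as [r [Hr1 Hr2]]; auto.
    - exists k. apply (Uk_refl H Hred Huc u Hu).
    - exists r. split; auto. }
  intros k Hk. destruct (Mx k) as [r [Hr1 Hr2]]. destruct (Mx (k - 1)) as [r' [Hr1' Hr2']].
  exists r, r'. split; [split; auto|]. split; [split; auto|].
  destruct (J k Hk r Hr1) as [n' [U' Hn']]. specialize (Hr2' n' U'). lia.
Qed.

Lemma linear_JB (u : H) (Hu : is_atom H u) (P Q k0 c0 : nat) : 1 <= Q ->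
  (forall k n, Uk H k n -> Q * n <= P * k) ->
  (forall j, Uk H (k0 + j * Q) (c0 + j * P)) -> exists M, JB M.
Proof.
  intros HQ Hi Hii. exists (P * (k0 + Q)). intros k Hk n U.
  pose proof (Hi k n U) as Hn.
  destruct (le_lt_dec k0 (k - 1)) as [Hle|Hlt].
  - set (t := k - 1 - k0). set (j := t / Q). set (i := t mod Q).
    assert (Ht : t = Q * j + i) by (apply Nat.div_mod; lia).
    assert (Hi' : i < Q) by (apply Nat.mod_upper_bound; lia).
    pose proof (Uk_pad_many H Hred Huc u Hu i _ _ (Hii j)) as X.
    replace (k0 + j * Q + i) with (k - 1) in X by lia.
    exists (c0 + j * P + i). split; auto.
    assert (Hk' : k <= j * Q + (k0 + Q)) by lia.
    assert (A1 : P * k <= P * (j * Q + (k0 + Q))) by (apply Nat.mul_le_mono_l; lia).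
    assert (A2 : P * (k0 + Q) <= Q * (P * (k0 + Q))) by (apply Nat.le_mul_l; lia).
    assert (Q * n <= Q * (j * P + P * (k0 + Q))) by nia.
    apply Nat.mul_le_mono_pos_l in H0; lia.
  - exists (k - 1). split. + apply (Uk_refl H Hred Huc u Hu).
    + assert (n <= P * k) by nia. nia.
Qed.
End Assemble.

Lemma ratio_le (a b c d : nat) : (0 < b)%nat -> (0 < d)%nat ->
  INR a / INR b <= INR c / INR d -> (a * d <= c * b)%nat.
Proof.
  intros Hb Hd Hh. apply INR_le. rewrite !mult_INR.
  assert (Hb' : 0 < INR b) by (apply lt_0_INR; lia).
  assert (Hd' : 0 < INR d) by (apply lt_0_INR; lia).
  apply Rmult_le_compat_r with (r := INR b * INR d) in Hh; [|left; apply Rmult_lt_0_compat; auto].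
  replace (INR a / INR b * (INR b * INR d)) with (INR a * INR d) in Hh by (field; lra).
  replace (INR c / INR d * (INR b * INR d)) with (INR c * INR b) in Hh by (field; lra).
  exact Hh.
Qed.

Section CaseA.
Local Open Scope nat_scope.
Variable H : Monoid.
Hypothesis Hred : reduced H.
Hypothesis Huc : unit_cancellative H.

Lemma concat_repeat_facts (l l' : list H) : Forall (is_atom H) l -> Forall (is_atom H) l' ->
  prod H l = prod H l' -> forall j,
  Forall (is_atom H) (concat (repeat l j)) /\ Forall (is_atom H) (concat (repeat l' j)) /\
  length (concat (repeat l j)) = j * length l /\ length (concat (repeat l' j)) = j * length l' /\
  prod H (concat (repeat l j)) = prod H (concat (repeat l' j)).
Proof.
  intros F F' E j. induction j as [|j [A [B [C [D G]]]]]; simpl.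
  - repeat split; auto.
  - rewrite !length_app, !prod_app, C, D, G, E. repeat split; try (apply Forall_app; auto); lia.
Qed.

Lemma bound_from_rho (P Q : nat) (HQ : 0 < Q) :
  (forall b : H, exists y, rho_set_is (Lset H b) y /\ (y <= INR P / INR Q)%R) ->
  forall k n, Uk H k n -> Q * n <= P * k.
Proof.
  intros Hb k n U. destruct (Nat.eq_dec k 0) as [->|Hk].
  - apply Uk_0 in U; auto. subst. lia.
  - destruct U as [b [Lk Ln]]. destruct (Hb b) as [y [R Hy]].
    destruct R as [[Z _]|[Mb [mb [LM [HM [HM2 [Lm [Hm [Hm2 Ey]]]]]]]]].
    + apply Z in Ln. subst. lia.
    + subst y. apply ratio_le in Hy; auto.
      assert (n <= Mb) by auto. assert (mb <= k) by (apply Hm2; auto; lia). nia.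
Qed.

Lemma case_a (u : H) (Hu : is_atom H u) (a : H) (x : R) :
  rho_set_is (Lset H a) x -> rho_monoid_is H x -> exists M, JB H M.
Proof.
  intros Ra [Hall Hlub].
  assert (UB : forall b : H, exists y, rho_set_is (Lset H b) y /\ (y <= x)%R).
  { intro b. destruct (Hall b) as [y Hy]. exists y. split; auto. apply (proj1 Hlub). eauto. }
  destruct Ra as [[Z Ex]|[M [m [LM [HM [HM2 [Lm [Hm [Hm2 Ex]]]]]]]]].
  - apply (linear_JB H Hred Huc u Hu 1 1 0 0); auto.
    + apply bound_from_rho; auto. intro b. destruct (UB b) as [y [R Hy]]. exists y. split; auto.
      simpl. lra.
    + intro j. simpl. rewrite Nat.mul_1_r. apply (Uk_refl H Hred Huc u Hu).
  - apply (linear_JB H Hred Huc u Hu M m 0 0); auto.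
    + apply bound_from_rho; auto. subst x. auto.
    + apply Lset_lists in LM as [l [F [Hl E]]]. apply Lset_lists in Lm as [l' [F' [Hl' E']]].
      intro j. destruct (concat_repeat_facts l' l F' F ltac:(congruence) j) as [A [B [C [D G]]]].
      simpl. rewrite <- Hl, <- Hl'.
      rewrite <- C, <- D. apply lists_Uk; auto.
Qed.
End CaseA.

Section CaseB.
Local Open Scope nat_scope.
Variable H : Monoid.
Hypothesis Hred : reduced H.
Hypothesis Huc : unit_cancellative H.

Lemma perm_prod (z z' : list H) : commutative H -> Permutation z z' -> prod H z = prod H z'.
Proof.
  intros C P. induction P; simpl; auto.
  - congruence.
  - rewrite !mulA, (C y x). reflexivity.
  - congruence.
Qed.

Lemma zeq_facts (z z' : list H) : zeq H z z' -> length z = length z' /\ prod H z = prod H z'.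
Proof. intros [[C P]|[_ E]].
  - split. + apply Permutation_length; auto. + apply perm_prod; auto.
  - subst; auto. Qed.

Lemma concat_rel (s : list (list H * list H)) : Forall (in_relations H) s ->
  Forall (is_atom H) (concat (map fst s)) /\ Forall (is_atom H) (concat (map snd s)) /\
  prod H (concat (map fst s)) = prod H (concat (map snd s)).
Proof.
  induction s as [|g s IH]; intro F; simpl; auto.
  inversion F as [|? ? [F1 [F2 E]] Fs]; subst. destruct (IH Fs) as [A [B C]].
  rewrite !prod_app, C, E. repeat split; try (apply Forall_app; auto); auto.
Qed.

Lemma split_last (s : list (list H * list H)) : Forall (in_relations H) s ->
  concat (map fst s) <> [] -> exists s1 g s2, s = s1 ++ g :: s2 /\ fst g <> [] /\
  concat (map fst s2) = [] /\ concat (map snd s2) = [].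
Proof.
  induction s as [|g s IH]; intros F N; simpl in *; [congruence|].
  inversion F as [|? ? Fg Fs]; subst.
  destruct (concat (map fst s)) as [|x r] eqn:E.
  - exists [], g, s. split; auto. split.
    + intro E0. rewrite E0 in N. simpl in N. auto.
    + split; auto. destruct (concat_rel s Fs) as [A [B C]]. rewrite E in C. simpl in C.
      symmetry in C. apply prod_atoms_one in C; auto.
  - destruct (IH Fs ltac:(discriminate)) as [s1 [g' [s2 [Es [A [B C]]]]]]. exists (g :: s1), g', s2.
    subst. auto.
Qed.

Lemma case_b (u : H) (Hu : is_atom H u) : relations_fg H -> exists M, JB H M.
Proof.
  intros [gens [Fg Dec]].
  set (M := fold_right (fun g acc => length (snd g) + acc) 0 gens).
  assert (HM : forall g, In g gens -> length (snd g) <= M).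
  { unfold M. clear. induction gens as [|g' gs IH]; simpl; intros g Hg; [tauto|].
    destruct Hg as [<-|Hg]; [lia|]. specialize (IH g Hg). lia. }
  exists M. intros k Hk n U.
  apply Uk_lists in U as [z [z' [F [F' [Lz [Lz' E]]]]]]; auto.
  destruct (Dec (z, z')) as [s [Fs [Z1 Z2]]].
  { split; [|split]; auto. }
  simpl in Z1, Z2. apply zeq_facts in Z1 as [L1 _]. apply zeq_facts in Z2 as [L2 _].
  assert (Fr : Forall (in_relations H) s).
  { rewrite Forall_forall in *. intros g Hg. apply Fg. apply Fs. auto. }
  destruct (split_last s Fr) as [s1 [g [s2 [Es [Ng [C1 C2]]]]]].
  { intro E0. rewrite E0 in L1. simpl in L1. lia. }
  subst s. rewrite map_app, concat_app in L1, L2. simpl in L1, L2.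
  rewrite C1 in L1. rewrite C2 in L2. rewrite app_nil_r, length_app in L1, L2.
  assert (Fr1 : Forall (in_relations H) s1) by (apply Forall_app in Fr; tauto).
  destruct (concat_rel s1 Fr1) as [A1 [A2 A3]].
  pose proof (lists_Uk H Hred Huc _ _ A1 A2 A3) as U1.
  assert (Hg : In g gens).
  { rewrite Forall_forall in Fs. apply Fs. apply in_or_app. simpl. auto. }
  specialize (HM g Hg).
  assert (length (fst g) >= 1) by (destruct (fst g); simpl; [congruence|lia]).
  set (t := k - 1 - length (concat (map fst s1))).
  pose proof (Uk_pad_many H Hred Huc u Hu t _ _ U1) as U2.
  exists (length (concat (map snd s1)) + t). split.
  - replace (k - 1) with (length (concat (map fst s1)) + t) by lia. exact U2.
  - lia.
Qed.
End CaseB.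

Local Open Scope nat_scope.

Definition vle (f x : nat -> nat) : Prop := forall i, f i <= x i.
Definition supp_lt (D : nat) (x : nat -> nat) : Prop := forall i, D <= i -> x i = 0.
Definition upd (y : nat -> nat) (D n : nat) : nat -> nat := fun i => if i =? D then n else y i.

Lemma choose_G (P : (nat -> nat) -> Prop) (D : nat) (L : list (nat -> nat)) :
  (forall f, In f L -> exists n, P (upd f D n)) ->
  exists G N, (forall g, In g G -> P g) /\ forall f, In f L -> exists n, n <= N /\ In (upd f D n) G.
Proof.
  induction L as [|f L IH]; intros Hf.
  - exists [], 0. split; simpl; tauto.
  - destruct IH as [G [N [HG1 HG2]]]. { intros g Hg. apply Hf. simpl; auto. }
    destruct (Hf f) as [n Hn]; [simpl; auto|].
    exists (upd f D n :: G), (max n N). split.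
    + intros g [<-|Hg]; auto.
    + intros g [<-|Hg].
      * exists n. split; [lia|simpl; auto].
      * destruct (HG2 g Hg) as [m [Hm Hm']]. exists m. split; [lia|simpl; auto].
Qed.

Lemma dickson : forall D (P : (nat -> nat) -> Prop), exists F : list (nat -> nat),
  (forall f, In f F -> P f) /\ forall x, P x -> supp_lt D x -> exists f, In f F /\ vle f x.
Proof.
  induction D as [|D IHD]; intros P.
  - destruct (classic (exists x, P x /\ supp_lt 0 x)) as [[x0 [P0 S0]]|N].
    + exists [x0]. split. * intros f [<-|[]]; auto.
      * intros x Px Sx. exists x0. split; [simpl; auto|]. intro i. rewrite (S0 i); lia.
    + exists []. split. * simpl; tauto. * intros x Px Sx. exfalso. eauto.
  - set (Q := fun y => supp_lt D y /\ exists n, P (upd y D n)).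
    destruct (IHD Q) as [FQ [HFQ1 HFQ2]].
    destruct (choose_G P D FQ) as [G [N [HG1 HG2]]].
    { intros f Hf. apply HFQ1 in Hf. apply Hf. }
    assert (Slices : forall N, exists Fs, (forall g, In g Fs -> P g) /\
      forall m y, m < N -> supp_lt D y -> P (upd y D m) -> exists g, In g Fs /\ vle g (upd y D m)).
    { clear N HG1 HG2. induction N as [|N IHN].
      - exists []. split; [simpl; tauto|]. intros; lia.
      - destruct IHN as [Fs [HF1 HF2]].
        destruct (IHD (fun y => P (upd y D N))) as [FN [HFN1 HFN2]].
        exists (map (fun f => upd f D N) FN ++ Fs). split.
        + intros g Hg. apply in_app_or in Hg as [Hg|Hg]; auto.
          apply in_map_iff in Hg as [f [<- Hf]]. auto.
        + intros m y Hm Sy Py. destruct (Nat.eq_dec m N) as [->|Hne].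
          * destruct (HFN2 y Py Sy) as [f [Hf Vf]]. exists (upd f D N). split.
            -- apply in_or_app. left. apply (in_map (fun f => upd f D N)). auto.
            -- intro i. unfold upd. destruct (i =? D); auto.
          * destruct (HF2 m y ltac:(lia) Sy Py) as [g [Hg Vg]]. exists g. split; auto.
            apply in_or_app; auto. }
    destruct (Slices N) as [Fs [HFs1 HFs2]].
    exists (G ++ Fs). split.
    + intros g Hg. apply in_app_or in Hg as [Hg|Hg]; auto.
    + intros x Px Sx. set (y := upd x D 0).
      assert (Sy : supp_lt D y).
      { intros i Hi. unfold y, upd. destruct (i =? D) eqn:E; auto.
        apply Nat.eqb_neq in E. apply Sx. lia. }
      assert (Ex : upd y D (x D) = x).
      { extensionality i. unfold y, upd. destruct (i =? D) eqn:E; auto.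
        apply Nat.eqb_eq in E. subst. auto. }
      assert (Qy : Q y). { split; auto. exists (x D). rewrite Ex. auto. }
      destruct (HFQ2 y Qy Sy) as [f [Hf Vf]].
      destruct (HG2 f Hf) as [n [Hn HnG]].
      destruct (le_lt_dec N (x D)) as [Hle|Hlt].
      * exists (upd f D n). split; [apply in_or_app; auto|].
        intro i. unfold upd. destruct (i =? D) eqn:E.
        -- apply Nat.eqb_eq in E. subst. lia.
        -- specialize (Vf i). unfold y, upd in Vf. rewrite E in Vf. auto.
      * destruct (HFs2 (x D) y Hlt Sy) as [g [Hg Vg]].
        { rewrite Ex. auto. }
        exists g. split; [apply in_or_app; auto|]. rewrite Ex in Vg. auto.
Qed.

Section Vec.
Local Open Scope nat_scope.
Variable H : Monoid.
Hypothesis Hred : reduced H.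
Hypothesis Huc : unit_cancellative H.
Hypothesis Hc : commutative H.

Lemma mulCA (a b c : H) : mul a (mul b c) = mul b (mul a c).
Proof. rewrite !mulA, (Hc a b). reflexivity. Qed.

Lemma mul4 (a b c d : H) : mul (mul a b) (mul c d) = mul (mul a c) (mul b d).
Proof. rewrite <- !mulA. f_equal. apply mulCA. Qed.

Fixpoint mpow (a : H) (n : nat) : H := match n with 0 => one | S n => mul a (mpow a n) end.

Lemma pow_add (a : H) m n : mpow a (m + n) = mul (mpow a m) (mpow a n).
Proof. induction m; simpl. - now rewrite mul1l. - rewrite IHm. apply mulA. Qed.

Lemma prod_repeat (a : H) n : prod H (repeat a n) = mpow a n.
Proof. induction n; simpl; congruence. Qed.

Variable A : list H.
Definition at_ (i : nat) : H := nth i A one.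

Fixpoint piF (n : nat) (x : nat -> nat) : H :=
  match n with 0 => one | S n => mul (piF n x) (mpow (at_ n) (x n)) end.
Fixpoint sumF (n : nat) (x : nat -> nat) : nat :=
  match n with 0 => 0 | S n => sumF n x + x n end.

Lemma piF_ext n x y : (forall i, i < n -> x i = y i) -> piF n x = piF n y.
Proof. induction n; intros E; simpl; auto. rewrite IHn by (intros; apply E; lia). rewrite E by lia. auto. Qed.

Lemma sumF_ext n x y : (forall i, i < n -> x i = y i) -> sumF n x = sumF n y.
Proof. induction n; intros E; simpl; auto. rewrite IHn by (intros; apply E; lia). rewrite E by lia. auto. Qed.

Lemma piF_add n x y : piF n (fun i => x i + y i) = mul (piF n x) (piF n y).
Proof. induction n; simpl. - now rewrite mul1l. - rewrite IHn, pow_add. apply mul4. Qed.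

Lemma sumF_add n x y : sumF n (fun i => x i + y i) = sumF n x + sumF n y.
Proof. induction n; simpl; lia. Qed.

Lemma piF_zero n : piF n (fun _ => 0) = one.
Proof. induction n; simpl; auto. rewrite IHn. apply mul1l. Qed.

Lemma sumF_zero n x : sumF n x = 0 -> forall i, i < n -> x i = 0.
Proof. induction n; simpl; intros E i Hi; [lia|]. destruct (Nat.eq_dec i n); subst; [lia|]. apply IHn; lia. Qed.

Lemma sumF_split d m w : sumF (d + m) w = sumF d w + sumF m (fun i => w (d + i)).
Proof. induction m; simpl. - rewrite Nat.add_0_r. lia. - rewrite Nat.add_succ_r. simpl. lia. Qed.

Definition ev (i : nat) : nat -> nat := fun j => if j =? i then 1 else 0.

Lemma piF_ev n i : i < n -> piF n (ev i) = at_ i.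
Proof.
  induction n; intros Hi; [lia|]. simpl. unfold ev at 2. destruct (Nat.eq_dec i n) as [->|Hne].
  - rewrite Nat.eqb_refl. simpl. rewrite (piF_ext n (ev n) (fun _ => 0)).
    + rewrite piF_zero, mul1l, mul1r. auto.
    + intros j Hj. unfold ev. destruct (j =? n) eqn:E; auto. apply Nat.eqb_eq in E. lia.
  - assert (E : (n =? i) = false) by (apply Nat.eqb_neq; lia). rewrite E. simpl.
    rewrite mul1r. apply IHn. lia.
Qed.

Lemma sumF_ev n i : i < n -> sumF n (ev i) = 1.
Proof.
  induction n; intros Hi; [lia|]. simpl. unfold ev at 2. destruct (Nat.eq_dec i n) as [->|Hne].
  - rewrite Nat.eqb_refl. rewrite (sumF_ext n (ev n) (fun _ => 0)).
    + clear. induction n; simpl; lia.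
    + intros j Hj. unfold ev. destruct (j =? n) eqn:E; auto. apply Nat.eqb_eq in E. lia.
  - assert (E : (n =? i) = false) by (apply Nat.eqb_neq; lia). rewrite E. rewrite IHn; lia.
Qed.

Fixpoint vlist (n : nat) (x : nat -> nat) : list H :=
  match n with 0 => [] | S n => vlist n x ++ repeat (at_ n) (x n) end.

Hypothesis HA : Forall (is_atom H) A.

Lemma vlist_facts n x : n <= length A ->
  Forall (is_atom H) (vlist n x) /\ prod H (vlist n x) = piF n x /\ length (vlist n x) = sumF n x.
Proof.
  induction n; intros Hn; simpl; auto.
  destruct IHn as [F [P L]]; [lia|]. rewrite prod_app, length_app, prod_repeat, repeat_length, P, L.
  repeat split; auto. apply Forall_app. split; auto. apply Forall_forall. intros y Hy.
  apply repeat_spec in Hy. subst. unfold at_. rewrite Forall_forall in HA. apply HA. apply nth_In. lia.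
Qed.

Hypothesis HAall : forall u, is_atom H u -> In u A.

Lemma list_to_vec (z : list H) : Forall (is_atom H) z ->
  exists x, piF (length A) x = prod H z /\ sumF (length A) x = length z /\ supp_lt (length A) x.
Proof.
  induction z as [|u z IH]; intros F.
  - exists (fun _ => 0). split; [apply piF_zero|]. split; [simpl; clear; induction (length A); simpl; lia|].
    intros i _; auto.
  - inversion F as [|? ? Fu Fz]; subst. destruct (IH Fz) as [x [P [L S]]].
    destruct (In_nth A u one (HAall u Fu)) as [i [Hi Ei]].
    exists (fun j => x j + ev i j). split; [|split].
    + rewrite piF_add, piF_ev, P by auto. unfold at_. rewrite Ei. simpl. apply Hc.
    + rewrite sumF_add, sumF_ev, L by auto. simpl. lia.
    + intros j Hj. rewrite S by auto. unfold ev. destruct (j =? i) eqn:E; auto.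
      apply Nat.eqb_eq in E. lia.
Qed.

End Vec.

Local Open Scope nat_scope.

Lemma max_ratio {X : Type} (qa pb : X -> nat) (F : list X) :
  F <> [] -> (forall f, In f F -> 0 < qa f) ->
  exists f0, In f0 F /\ forall g, In g F -> (pb g * qa f0 <= pb f0 * qa g)%nat.
Proof.
  induction F as [|f F IH]; intros N Pos; [congruence|].
  destruct F as [|f' F'].
  - exists f. split; [simpl; auto|]. intros g [<-|[]]. lia.
  - destruct IH as [f1 [H1 H2]]; [discriminate| intros; apply Pos; simpl; auto|].
    assert (P1 : 0 < qa f1) by (apply Pos; simpl; auto).
    assert (P0 : 0 < qa f) by (apply Pos; simpl; auto).
    destruct (le_lt_dec (pb f * qa f1) (pb f1 * qa f)) as [Hle|Hlt].
    + exists f1. split; [simpl; auto|]. intros g [<-|Hg]; auto.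
    + exists f. split; [simpl; auto|]. intros g [<-|Hg]; [lia|].
      specialize (H2 g Hg).
      assert (qa f1 * (pb g * qa f) <= qa f1 * (pb f * qa g)) by nia.
      apply Nat.mul_le_mono_pos_l in H; auto.
Qed.

Section CaseC.
Local Open Scope nat_scope.
Variable H : Monoid.
Hypothesis Hred : reduced H.
Hypothesis Huc : unit_cancellative H.
Hypothesis Hc : commutative H.
Variable A : list H.
Hypothesis HA : Forall (is_atom H) A.
Hypothesis HAall : forall u, is_atom H u -> In u A.

Let d := length A.
Definition shift (w : nat -> nat) : nat -> nat := fun i => w (d + i).
Definition RelD (w : nat -> nat) : Prop :=
  supp_lt (2 * d) w /\ exists h : H, mul h (piF H A d w) = mul h (piF H A d (shift w)).

Lemma sat_alg (h1 h2 a b c e : H) : mul h1 a = mul h1 b -> mul h2 (mul a c) = mul h2 (mul b e) ->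
  mul (mul (mul h1 h2) b) c = mul (mul (mul h1 h2) b) e.
Proof.
  intros E1 E2.
  transitivity (mul (mul h1 b) (mul h2 c)).
  { rewrite !mulA. f_equal. rewrite <- !mulA. f_equal. apply Hc. }
  rewrite <- E1.
  transitivity (mul h1 (mul h2 (mul a c))).
  { rewrite <- !mulA. f_equal. rewrite !mulA, (Hc a h2). reflexivity. }
  rewrite E2. rewrite !mulA. reflexivity.
Qed.

Lemma Delta_sat w f : RelD w -> RelD f -> vle f w -> RelD (fun i => w i - f i).
Proof.
  intros [Sw [h2 E2]] [Sf [h1 E1]] V. split.
  - intros i Hi. rewrite Sw by auto. lia.
  - exists (mul (mul h1 h2) (piF H A d (shift f))).
    assert (Dw : piF H A d w = mul (piF H A d f) (piF H A d (fun i => w i - f i))).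
    { rewrite <- (piF_add H Hc). apply piF_ext. intros i _. specialize (V i). lia. }
    assert (Ds : piF H A d (shift w) = mul (piF H A d (shift f)) (piF H A d (shift (fun i => w i - f i)))).
    { rewrite <- (piF_add H Hc). apply piF_ext. intros i _. unfold shift. specialize (V (d + i)). lia. }
    rewrite Dw, Ds in E2. exact (sat_alg _ _ _ _ _ _ E1 E2).
Qed.

Lemma Delta_zero w : RelD w -> (sumF d w = 0 <-> sumF d (shift w) = 0).
Proof.
  intros [_ [h E]].
  assert (Key : forall x, mul h one = mul h (piF H A d x) -> sumF d x = 0).
  { intros x E0. rewrite mul1r in E0. assert (U : is_unit H (piF H A d x)) by (apply (Huc h); left; auto).
    apply Hred in U. destruct (vlist_facts H A HA d x ltac:(unfold d; lia)) as [F [P L]].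
    rewrite U in P. apply prod_atoms_one in P; auto. rewrite P in L. simpl in L. auto. }
  split; intro Z.
  - apply Key. rewrite <- E. f_equal. symmetry. rewrite (piF_ext H A d w (fun _ => 0)).
    + apply piF_zero.
    + intros. apply sumF_zero with d; auto.
  - apply Key. rewrite E. f_equal. symmetry. rewrite (piF_ext H A d (shift w) (fun _ => 0)).
    + apply piF_zero.
    + intros. apply sumF_zero with d; auto.
Qed.

Lemma sumF_2d w : sumF (2 * d) w = sumF d w + sumF d (shift w).
Proof. replace (2 * d) with (d + d) by lia. apply sumF_split. Qed.

Lemma sumF_le n f w : vle f w -> sumF n f <= sumF n w.
Proof. intro V. induction n; simpl; auto. specialize (V n). lia. Qed.

Lemma sumF_sub n f w : vle f w -> sumF n (fun i => w i - f i) = sumF n w - sumF n f.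
Proof. intro V. induction n; simpl; auto. pose proof (sumF_le n f w V). specialize (V n). lia. Qed.

Lemma case_c_data : (exists u, is_atom H u) ->
  exists f0, RelD f0 /\ 0 < sumF d f0 /\
    forall w, RelD w -> sumF d f0 * sumF d (shift w) <= sumF d (shift f0) * sumF d w.
Proof.
  intros [u Hu].
  set (P := fun w => RelD w /\ 0 < sumF (2 * d) w).
  destruct (dickson (2 * d) P) as [F [HF1 HF2]].
  destruct (In_nth A u one (HAall u Hu)) as [i0 [Hi0 Ei0]].
  set (w0 := fun j => ev i0 j + ev (d + i0) j).
  assert (D0 : RelD w0).
  { split.
    - intros j Hj. unfold w0, ev. destruct (j =? i0) eqn:E1; [apply Nat.eqb_eq in E1; unfold d in *; lia|].
      destruct (j =? d + i0) eqn:E2; [apply Nat.eqb_eq in E2; unfold d in *; lia|]. auto.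
    - exists one. f_equal. apply piF_ext. intros j Hj. unfold w0, shift, ev.
      destruct (j =? i0) eqn:E1; destruct (d + j =? i0) eqn:E2; destruct (j =? d + i0) eqn:E3;
        destruct (d + j =? d + i0) eqn:E4;
        repeat match goal with
        | [ E : (_ =? _) = true |- _ ] => apply Nat.eqb_eq in E
        | [ E : (_ =? _) = false |- _ ] => apply Nat.eqb_neq in E end; lia. }
  assert (P0 : P w0).
  { split; auto. rewrite sumF_2d. unfold w0. rewrite sumF_add, sumF_ev; [lia|unfold d; lia]. }
  assert (NE : F <> []).
  { destruct (HF2 w0 P0 (proj1 D0)) as [f [Hf _]]. intro E. rewrite E in Hf. auto. }
  assert (Pos : forall f, In f F -> 0 < sumF d f).
  { intros f Hf. destruct (HF1 f Hf) as [Df Sf]. rewrite sumF_2d in Sf.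
    destruct (Nat.eq_dec (sumF d f) 0) as [Z|Z]; [|lia].
    apply (Delta_zero f Df) in Z. lia. }
  destruct (max_ratio (sumF d) (fun f => sumF d (shift f)) F NE Pos) as [f0 [Hf0 Max]].
  exists f0. split; [apply HF1; auto|]. split; [apply Pos; auto|].
  intro w. remember (sumF (2 * d) w) as s eqn:Es. revert w Es.
  induction s as [s IH] using lt_wf_ind. intros w Es Dw.
  destruct (Nat.eq_dec s 0) as [->|Hs].
  - rewrite sumF_2d in Es. assert (sumF d (shift w) = 0) by lia. rewrite H0. lia.
  - assert (Pw : P w) by (split; auto; lia).
    destruct (HF2 w Pw (proj1 Dw)) as [f [Hf Vf]].
    destruct (HF1 f Hf) as [Df Sf].
    pose proof (Delta_sat w f Dw Df Vf) as Dw'.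
    assert (Lt : sumF (2 * d) (fun i => w i - f i) < s).
    { rewrite sumF_sub by auto. pose proof (sumF_le (2*d) f w Vf). lia. }
    specialize (IH _ Lt _ eq_refl Dw').
    specialize (Max f Hf).
    assert (Vs : vle (shift f) (shift w)) by (intro i; apply Vf).
    assert (E1 : sumF d w = sumF d (fun i => w i - f i) + sumF d f).
    { rewrite sumF_sub by auto. pose proof (sumF_le d f w Vf). lia. }
    assert (E2 : sumF d (shift w) = sumF d (shift (fun i => w i - f i)) + sumF d (shift f)).
    { rewrite (sumF_ext d (shift (fun i => w i - f i)) (fun i => shift w i - shift f i)) by (intros; reflexivity).
      rewrite (sumF_sub d (shift f) (shift w) Vs).
      pose proof (sumF_le d _ _ Vs). lia. }
    rewrite E1, E2. nia.
Qed.

End CaseC.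

Local Open Scope nat_scope.

Section CaseC2.
Variable H : Monoid.
Hypothesis Hred : reduced H.
Hypothesis Huc : unit_cancellative H.

Lemma atom_in_prod (u : H) (s : list H) : is_atom H u -> prod H s = u -> In u s.
Proof.
  intros Hu. induction s as [|g s IH]; simpl; intro E.
  - exfalso. exact (atom_neq_one H u Hu (eq_sym E)).
  - pose proof Hu as [_ Hs]. destruct (Hs g (prod H s) (eq_sym E)) as [U|U]; apply Hred in U.
    + right. apply IH. rewrite U, mul1l in E. auto.
    + left. rewrite U, mul1r in E. auto.
Qed.

Lemma atoms_list : finitely_generated H ->
  exists A : list H, Forall (is_atom H) A /\ forall u, is_atom H u -> In u A.
Proof.
  intros [gens Hg].
  assert (Gen : forall L : list H, exists A, Forall (is_atom H) A /\
     forall u, is_atom H u -> In u L -> In u A).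
  { induction L as [|g L [A [FA HA]]].
    - exists []. split; auto.
    - destruct (classic (is_atom H g)) as [Hg'|Hg'].
      + exists (g :: A). split; auto. intros u Hu [<-|Hin]; simpl; auto.
      + exists A. split; auto. intros u Hu [<-|Hin]; [tauto|auto]. }
  destruct (Gen gens) as [A [FA HA]]. exists A. split; auto.
  intros u Hu. apply HA; auto. destruct (Hg u) as [s [Fs Es]].
  apply atom_in_prod in Es; auto. rewrite Forall_forall in Fs. auto.
Qed.

Lemma prod_concat_repeat (l : list H) j : prod H (concat (repeat l j)) = mpow H (prod H l) j.
Proof. induction j; simpl; auto. rewrite prod_app, IHj. auto. Qed.

Lemma length_concat_repeat (l : list H) j : length (concat (repeat l j)) = j * length l.
Proof. induction j; simpl; auto. rewrite length_app, IHj. lia. Qed.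

Lemma Forall_concat_repeat (l : list H) j : Forall (is_atom H) l -> Forall (is_atom H) (concat (repeat l j)).
Proof. intro F. induction j; simpl; auto. apply Forall_app; auto. Qed.

Hypothesis Hc : commutative H.

Lemma pow_cat (h a b : H) j : mul h a = mul h b -> mul h (mpow H a j) = mul h (mpow H b j).
Proof.
  intro E. induction j; simpl; auto.
  rewrite mulA, E, <- mulA, (mulCA H Hc h b), IHj, (mulCA H Hc b h). reflexivity.
Qed.


Lemma case_c (u : H) (Hu : is_atom H u) : atomic H -> finitely_generated H -> exists M, JB H M.
Proof.
  intros At FG. destruct (atoms_list FG) as [A [HA HAall]].
  destruct (case_c_data H Hred Huc Hc A HA HAall (ex_intro _ u Hu)) as [f0 [Df0 [Pos Ineq]]].
  pose proof Df0 as [_ [h Eh]].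
  assert (Hh : exists c, Forall (is_atom H) c /\ prod H c = h).
  { destruct (classic (is_unit H h)) as [U|U].
    - apply Hred in U. exists []. simpl. auto.
    - destruct (At h U) as [c [Fc [_ Ec]]]. eauto. }
  destruct Hh as [c [Fc Ec]].
  set (d := length A) in *.
  apply (linear_JB H Hred Huc u Hu (sumF d (shift H A f0)) (sumF d f0) (length c) (length c)); [lia| |].
  - intros k n U. apply Uk_lists in U as [z [z' [F [F' [Lz [Lz' E]]]]]]; auto.
    destruct (list_to_vec H Hc A HAall z F) as [x [Px [Sx Sux]]].
    destruct (list_to_vec H Hc A HAall z' F') as [y [Py [Sy Suy]]].
    set (w := fun i => if i <? d then x i else y (i - d)).
    assert (Dw : RelD H A w).
    { split.
      - intros i Hi. unfold w. destruct (i <? d) eqn:E0; [apply Nat.ltb_lt in E0; unfold d in *; lia|].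
        apply Suy. unfold d in *. lia.
      - exists one. f_equal. fold d.
        rewrite (piF_ext H A d w x), (piF_ext H A d (shift H A w) y); [unfold d; congruence| |].
        + intros i Hi. unfold shift, w. fold d.
          destruct (d + i <? d) eqn:E0; [apply Nat.ltb_lt in E0; lia|]. f_equal. lia.
        + intros i Hi. unfold w. apply Nat.ltb_lt in Hi. rewrite Hi. auto. }
    specialize (Ineq w Dw). fold d in Ineq.
    rewrite (sumF_ext d w x) in Ineq.
    2:{ intros i Hi. unfold w. apply Nat.ltb_lt in Hi. rewrite Hi. auto. }
    rewrite (sumF_ext d (shift H A w) y) in Ineq.
    2:{ intros i Hi. unfold shift, w. fold d.
        destruct (d + i <? d) eqn:E0; [apply Nat.ltb_lt in E0; lia|]. f_equal. lia. }
    unfold d in *. rewrite Sx, Sy, Lz, Lz' in Ineq. lia.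
  - intro j.
    destruct (vlist_facts H A HA d f0 ltac:(unfold d; lia)) as [Fa [Pa La]].
    destruct (vlist_facts H A HA d (shift H A f0) ltac:(unfold d; lia)) as [Fb [Pb Lb]].
    set (la := vlist H A d f0) in *. set (lb := vlist H A d (shift H A f0)) in *.
    pose proof (lists_Uk H Hred Huc (c ++ concat (repeat la j)) (c ++ concat (repeat lb j))) as X.
    rewrite !length_app, !length_concat_repeat, La, Lb in X. apply X.
    + apply Forall_app; split; auto. apply Forall_concat_repeat; auto.
    + apply Forall_app; split; auto. apply Forall_concat_repeat; auto.
    + rewrite !prod_app, !prod_concat_repeat, Ec, Pa, Pb. apply pow_cat. exact Eh.
Qed.
End CaseC2.

Local Open Scope R_scope.
Theorem proposition3p5 (H : Monoid) :
  (exists a : H, a <> one) ->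
  reduced H -> atomic H -> unit_cancellative H ->
  ((exists (a : H) (x : R), rho_set_is (Lset H a) x /\ rho_monoid_is H x) \/
   (cancellative H /\ relations_fg H) \/
   (commutative H /\ finitely_generated H)) ->
  exists M : nat, forall k : nat, (2 <= k)%nat ->
    exists r r' : nat,
      rhok_is H k r /\ rhok_is H (k - 1) r' /\ (r <= r' + M)%nat.
Proof.
  intros NT Hred At Huc Hcase.
  destruct (exists_atom H Hred NT At) as [u Hu].
  assert (J : exists M, JB H M).
  { destruct Hcase as [[a [x [R1 R2]]]|[[_ RF]|[Hc FG]]].
    - exact (case_a H Hred Huc u Hu a x R1 R2).
    - exact (case_b H Hred Huc u Hu RF).
    - exact (case_c H Hred Huc Hc u Hu At FG). }
  destruct J as [M J]. exact (from_JB H Hred Huc u Hu M J).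
Qed.
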